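(* (1) For every $r\in\mathbb N$, the category $\mathcal C_r$ is a full subcategory of $\mathcal C^{pol}\cap\mathcal C^{int}$ (each object of $\mathcal C_r$ being regarded as a $\mathbf U(\infty)$-module via $\zeta_r$). (2) For each $r\in\mathbb N$ there is a surjective algebra homomorphism $\mathbf U(\infty,r+1)\to\mathbf U(\infty,r)$ sending $\zeta_{r+1}(E_i),\zeta_{r+1}(F_i),\zeta_{r+1}(K_i)$ to $\zeta_r(E_i),\zeta_r(F_i),\zeta_r(K_i)$ respectively, for all $i\in\mathbb Z$. Hence $\mathcal C_r$ is a full subcategory of $\mathcal C_{r+1}$.
   Context: $v$ indeterminate. $\mathbf U(\infty)$ is the $\mathbb Q(v)$-algebra with generators $E_i,F_i,K_i,K_i^{-1}$ ($i\in\mathbb Z$) and relations: $K_iK_j=K_jK_i$, $K_iK_i^{-1}=1$; $K_iE_j=v^{\delta_{i,j}-\delta_{i,j+1}}E_jK_i$; $K_iF_j=v^{\delta_{i,j+1}-\delta_{i,j}}F_jK_i$; $E_iE_j=E_jE_i$, $F_iF_j=F_jF_i$ if $|i-j|>1$; $E_iF_j-F_jE_i=\delta_{i,j}\frac{\widetilde K_i-\widetilde K_i^{-1}}{v-v^{-1}}$, $\widetilde K_i=K_iK_{i+1}^{-1}$; $E_i^2E_j-(v+v^{-1})E_iE_jE_i+E_jE_i^2=0$ and likewise for $F$ if $|i-j|=1$; coproduct $\Delta(E_i)=E_i\otimes\widetilde K_i+1\otimes E_i$, $\Delta(F_i)=F_i\otimes1+\widetilde K_i^{-1}\otimes F_i$,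 $\Delta(K_j)=K_j\otimes K_j$. ${\bf\Omega}_\infty$ has basis $\{\omega_i\}_{i\in\mathbb Z}$ with $K_a\omega_b=v^{\delta_{a,b}}\omega_b$, $E_a\omega_b=\delta_{a+1,b}\omega_a$, $F_a\omega_b=\delta_{a,b}\omega_{a+1}$; ${\bf\Omega}_\infty^{\otimes r}$ is a $\mathbf U(\infty)$-module via $\Delta$. The Hecke algebra ${\boldsymbol{\mathcal H}}$ of $\mathfrak S_r$ over $\mathbb Q(v)$ (basis $\mathcal T_w$ with $\mathcal T_s\mathcal T_w=\mathcal T_{sw}$ if $\ell(sw)>\ell(w)$, else $(v-v^{-1})\mathcal T_w+\mathcal T_{sw}$) acts on the right by $(\omega_{i_1}\cdots\omega_{i_r})\mathcal T_{(j,j+1)}=\omega_{i_1}\cdots\omega_{i_{j+1}}\omega_{i_j}\cdots\omega_{i_r}$ if $i_j<i_{j+1}$; $=v\,\omega_{i_1}\cdots\omega_{i_r}$ if $i_j=i_{j+1}$; $=(v-v^{-1})\omega_{i_1}\cdots\omega_{i_r}+\omega_{i_1}\cdots\omega_{i_{j+1}}\omega_{i_j}\cdots\omega_{i_r}$ if $i_j>i_{j+1}$. ${\boldsymbol{\mathcal S}}(\infty,r)=\operatorname{End}_{\boldsymbol{\mathcal H}}({\bf\Omega}_\infty^{\otimes r})$; the commuting actions give $\zeta_r:\mathbf U(\infty)\to{\boldsymbol{\mathcal S}}(\infty,r)$, and $\mathbf U(\infty,r)=\zeta_r(\mathbf U(\infty))$. For a $\mathbf U(\infty)$-module $M$ and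 an integer sequence $\lambda=(\lambda_i)_{i\in\mathbb Z}$, $M_\lambda=\{x:K_ix=v^{\lambda_i}x\ \forall i\}$; $M$ is a weight module if $M=\bigoplus_\lambda M_\lambda$ (over all integer sequences). $\mathcal C^{pol}$: weight modules all of whose weights $\lambda$ (with $M_\lambda\ne0$) are finitely supported with nonnegative entries. $\mathcal C^{int}$: weight modules such that for all $x\in M$ and $i$, $E_i^nx=F_i^nx=0$ for $n\gg0$. $\mathcal C_r$: the category of $\mathbf U(\infty,r)$-modules which, regarded as $\mathbf U(\infty)$-modules via $\zeta_r$, are weight modules (a full subcategory of $\mathbf U(\infty,r)$-modules); via the homomorphism in (2), $\mathbf U(\infty,r)$-modules are $\mathbf U(\infty,r+1)$-modules. *)

(* Defs.v *)
From Stdlib Require List.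
From HB Require Import structures.
From mathcomp Require Import all_boot all_order all_algebra.
From mathcomp Require Import fraction.
From mathcomp Require Import finmap.
From mathcomp.multinomials Require Import monalg.
Set Implicit Arguments. Unset Strict Implicit. Unset Printing Implicit Defensive.
Import Order.TTheory GRing.Theory Num.Theory.
Local Open Scope ring_scope.

Definition Qv : fieldType := {fraction {poly rat}}.
Definition v : Qv := @FracField.tofrac _ ('X : {poly rat}).

Inductive gen := GE of int | GF of int | GK of int | GKi of int.

(* Noncommutative polynomial expressions in the generators with coefficients
   in Q(v) (elements of the free algebra on the generators). *)
Inductive term :=
| Tgen of gen
| Tone
| Tadd of term & term
| Tscale of Qv & term
| Tmul of term & term.

Fixpoint evalOp (M : lmodType Qv) (rho : gen -> M -> M) (t : term) : M -> M :=
  match t with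
  | Tgen g => rho g
  | Tone => id
  | Tadd s u => fun x => evalOp rho s x + evalOp rho u x
  | Tscale c s => fun x => c *: evalOp rho s x
  | Tmul s u => fun x => evalOp rho s (evalOp rho u x)
  end.

(* Basis vector omega_{i_1} ... omega_{i_r} is << (i_1,...,i_r) >>. *)
Definition Omega (r : nat) : lmodType Qv := {malg Qv[r.-tuple int]}.

Definition lin_ext r (f : r.-tuple int -> Omega r) (x : Omega r) : Omega r :=
  \sum_(k <- msupp x) x@_k *: f k.

Definition tset r (k : r.-tuple int) (j : 'I_r) (b : int) : r.-tuple int :=
  [tuple (if i == j then b else tnth k i) | i < r].

(* exponent of Ktilde_a = K_a K_{a+1}^{-1} on the factor omega_b *)
Definition ktexp (a b : int) : int := (b == a)%:Z - (b == a + 1)%:Z.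

(* Delta^{(r)}(E_a) = sum_j 1^{(x)(j-1)} (x) E_a (x) Ktilde_a^{(x)(r-j)} *)
Definition E_basis r (a : int) (k : r.-tuple int) : Omega r :=
  \sum_(j < r | tnth k j == a + 1)
     (v ^ (\sum_(l < r | (j < l)%N) ktexp a (tnth k l))) *: << tset k j a >>.

(* Delta^{(r)}(F_a) = sum_j Ktilde_a^{-1 (x)(j-1)} (x) F_a (x) 1^{(x)(r-j)} *)
Definition F_basis r (a : int) (k : r.-tuple int) : Omega r :=
  \sum_(j < r | tnth k j == a)
     (v ^ (- \sum_(l < r | (l < j)%N) ktexp a (tnth k l))) *: << tset k j (a + 1) >>.

Definition K_basis r (a : int) (k : r.-tuple int) : Omega r :=
  v ^ ((count (pred1 a) k)%:Z) *: << k >>.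

Definition Ki_basis r (a : int) (k : r.-tuple int) : Omega r :=
  v ^ (- (count (pred1 a) k)%:Z) *: << k >>.

Definition zeta r (g : gen) : Omega r -> Omega r :=
  match g with
  | GE a => lin_ext (E_basis a)
  | GF a => lin_ext (F_basis a)
  | GK a => lin_ext (K_basis a)
  | GKi a => lin_ext (Ki_basis a)
  end.

(* U(oo,r) = zeta_r(U(oo)): the set of endomorphisms of Omega^{(x) r}
   obtained by evaluating expressions in the generators. *)
Definition Uinf r : (Omega r -> Omega r) -> Prop :=
  fun X => exists t : term, X = evalOp (@zeta r) t.

Definition gens_linear (M : lmodType Qv) (rho : gen -> M -> M) : Prop :=
  forall g, linear (rho g).

(* A U(oo,r)-module structure on M, given through the action of the
   generators: the assignment zeta_r(t) |-> t acting on M is well defined,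
   i.e. it factors through U(oo,r) = zeta_r(U(oo)). *)
Definition is_Ur_module r (M : lmodType Qv) (rho : gen -> M -> M) : Prop :=
  gens_linear rho /\
  forall t : term, (forall x : Omega r, evalOp (@zeta r) t x = 0) ->
                   forall m : M, evalOp rho t m = 0.

Definition Ur_hom (M N : lmodType Qv) (rhoM : gen -> M -> M)
  (rhoN : gen -> N -> N) (f : M -> N) : Prop :=
  linear f /\ forall t m, f (evalOp rhoM t m) = evalOp rhoN t (f m).

Definition U_hom (M N : lmodType Qv) (rhoM : gen -> M -> M)
  (rhoN : gen -> N -> N) (f : M -> N) : Prop :=
  linear f /\ forall g m, f (rhoM g m) = rhoN g (f m).

Definition weight_vec (M : lmodType Qv) (rho : gen -> M -> M)
  (lam : int -> int) (x : M) : Prop :=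
  forall i, rho (GK i) x = v ^ (lam i) *: x.

(* M = sum_lambda M_lambda (the sum is automatically direct) *)
Definition weight_module (M : lmodType Qv) (rho : gen -> M -> M) : Prop :=
  forall x : M, exists s : seq ((int -> int) * M),
    (forall p, Stdlib.Lists.List.In p s -> weight_vec rho p.1 p.2) /\
    x = \sum_(p <- s) p.2.

Definition finitely_supported (lam : int -> int) : Prop :=
  exists N : nat, forall i : int, (N < absz i)%N -> lam i = 0.

Definition in_Cpol (M : lmodType Qv) (rho : gen -> M -> M) : Prop :=
  weight_module rho /\
  forall (lam : int -> int) (x : M), x <> 0 -> weight_vec rho lam x ->
    finitely_supported lam /\ forall i, 0 <= lam i.

Definition in_Cint (M : lmodType Qv) (rho : gen -> M -> M) : Prop :=
  weight_module rho /\
  forall (x : M) (i : int), exists N : nat, forall n : nat, (N <= n)%N ->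
    iter n (rho (GE i)) x = 0 /\ iter n (rho (GF i)) x = 0.

Definition in_Cr r (M : lmodType Qv) (rho : gen -> M -> M) : Prop :=
  is_Ur_module r rho /\ weight_module rho.

(* Main.v *)
Require Import Defs.
From HB Require Import structures.
From mathcomp Require Import all_boot all_order all_algebra.
From mathcomp Require Import fraction.
From mathcomp Require Import finmap.
From mathcomp.multinomials Require Import monalg.
From mathcomp Require Import zify ring.
From Stdlib Require Import Classical_Prop ClassicalEpsilon FunctionalExtensionality.
Set Implicit Arguments. Unset Strict Implicit. Unset Printing Implicit Defensive.
Import GRing.Theory.
Local Open Scope ring_scope.


Section LE.
Context (K : choiceType) (V : lmodType Qv).
Definition LE (f : K -> V) (x : {malg Qv[K]}) : V :=
  \sum_(k <- msupp x) x@_k *: f k.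

Lemma LEw f (d : {fset K}) x : (msupp x `<=` d)%fset ->
  LE f x = \sum_(k <- d) x@_k *: f k.
Proof.
move=> le; rewrite /LE (big_fset_incl _ le) //= => k _ /mcoeff_outdom ->.
by rewrite scale0r.
Qed.

Lemma LED f x y : LE f (x + y) = LE f x + LE f y.
Proof.
rewrite (LEw f (msuppD_le x y)) (LEw f (fsubsetUl (msupp x) (msupp y))).
rewrite (LEw f (fsubsetUr (msupp x) (msupp y))) -big_split /=.
by apply: eq_bigr => k _; rewrite mcoeffD scalerDl.
Qed.

Lemma LEZ f a x : LE f (a *: x) = a *: LE f x.
Proof.
rewrite (LEw f (msuppZ_le a x)) /LE scaler_sumr.
by apply: eq_bigr => k _; rewrite mcoeffZ scalerA.
Qed.

Lemma LE0 f : LE f 0 = 0.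
Proof. by rewrite /LE msupp0 big_seq_fset0. Qed.

Lemma LEU f k : LE f << k >> = f k.
Proof.
rewrite /LE msuppU oner_eq0 big_seq_fset1 mcoeffUU scale1r //.
Qed.
End LE.

Lemma LE_sum (K : choiceType) (V : lmodType Qv) (f : K -> V) I (s : seq I) (P : pred I) F :
  LE f (\sum_(i <- s | P i) F i) = \sum_(i <- s | P i) LE f (F i).
Proof. exact: (big_morph _ (LED f) (LE0 f)). Qed.

Lemma LE_comp (K K' : choiceType) (V : lmodType Qv) (f : K -> {malg Qv[K']}) (g : K' -> V) x :
  LE g (LE f x) = LE (fun k => LE g (f k)) x.
Proof.
have -> : LE f x = \sum_(k <- msupp x) x@_k *: f k by [].
rewrite LE_sum; apply: eq_bigr => k _; by rewrite LEZ.
Qed.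

Lemma mcoeff_sum (K : choiceType) I (s : seq I) (P : pred I) (F : I -> {malg Qv[K]}) k :
  (\sum_(i <- s | P i) F i)@_k = \sum_(i <- s | P i) (F i)@_k.
Proof. exact: (big_morph _ (@mcoeffD _ _ k) (@mcoeff0 _ _ k)). Qed.

Lemma sum_supp_pick (K : choiceType) (x : {malg Qv[K]}) (c : K -> Qv) k :
  \sum_(i <- msupp x) x@_i * c i * (i == k)%:R = x@_k * c k.
Proof.
have [kx|knx] := msuppP.
  rewrite (bigD1_seq k) ?fset_uniq //= eqxx mulr1 big1 ?addr0 //.
  by move=> i /negbTE ->; rewrite mulr0.
rewrite big_seq big1 ?mul0r // => i ix.
by case: eqP ix => [->|]; rewrite ?mulr0 // (negbTE knx).
Qed.

Lemma LE_coef (K K' : choiceType) (h : K -> K') (hi : injective h) (d : K -> Qv) x k :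
  (LE (fun k => d k *: << h k >>) x)@_(h k) = x@_k * d k.
Proof.
rewrite /LE mcoeff_sum.
rewrite (eq_bigr (fun k' => x@_k' * d k' * (k' == k)%:R)) ?sum_supp_pick //.
by move=> k' _; rewrite mcoeffZ mcoeffZ mcoeffU (inj_eq hi) mulrA.
Qed.

Lemma eq_LE (K : choiceType) (V : lmodType Qv) (f g : K -> V) x :
  f =1 g -> LE f x = LE g x.
Proof. by move=> e; apply: eq_bigr => k _; rewrite e. Qed.

Lemma count_sum_seq (p : pred int) (s : seq int) : count p s = (\sum_(x <- s) p x)%N.
Proof. by elim: s => [|y s IH]; rewrite ?big_nil ?big_cons //= IH. Qed.

Lemma count_tuple (r : nat) (p : pred int) (k : r.-tuple int) :
  count p k = (\sum_(i < r) p (tnth k i))%N.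
Proof.
rewrite count_sum_seq -{1}(map_tnth_enum k) big_map big_enum //.
Qed.

Lemma count_tset (r : nat) (p : pred int) (k : r.-tuple int) j b :
  (count p (tset k j b) + p (tnth k j) = count p k + p b)%N.
Proof.
rewrite !count_tuple (bigD1 j) //= [in RHS](bigD1 j) //= tnth_mktuple eqxx.
have -> : (\sum_(i < r | i != j) p (tnth (tset k j b) i) = \sum_(i < r | i != j) p (tnth k i))%N.
  by apply: eq_bigr => i /negbTE ij; rewrite tnth_mktuple ij.
by rewrite addnC (addnC (p b)) addnA.
Qed.

Definition ext r (c : int) (x : Omega r) : Omega r.+1 :=
  LE (fun k : r.-tuple int => 1 *: << cons_tuple c k >>) x.

Lemma cons_inj r c : injective (fun k : r.-tuple int => cons_tuple c k).
Proof. by move=> k1 k2 /(congr1 (fun t => behead (tval t))) /= /val_inj. Qed.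

Lemma ext_inj r c (x : Omega r) : ext c x = 0 -> x = 0.
Proof.
move=> e; apply/malgP => k.
have := @LE_coef _ _ _ (@cons_inj r c) (fun _ => 1) x k.
rewrite -/(ext c x) e mcoeff0 mulr1 => <-; by rewrite mcoeff0.
Qed.

Lemma tset_cons r c (k : r.-tuple int) j b :
  tset (cons_tuple c k) (lift ord0 j) b = cons_tuple c (tset k j b).
Proof.
apply: eq_from_tnth => i; case: (unliftP ord0 i) => [i'|] ->.
  by rewrite tnth_mktuple !tnthS tnth_mktuple (inj_eq (@lift_inj _ ord0)).
by rewrite tnth_mktuple (negbTE (neq_lift _ _)) !tnth0.
Qed.

Lemma E_cons r a c (k : r.-tuple int) : c != a + 1 ->
  E_basis a (cons_tuple c k) = ext c (E_basis a k).
Proof.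
move=> ca; rewrite /E_basis /ext LE_sum.
rewrite big_mkcond big_ord_recl /= tnth0 (negbTE ca) add0r -big_mkcond /=.
apply: eq_big => [j|j _]; first by rewrite tnthS.
rewrite LEZ LEU tset_cons scale1r; congr (v ^ _ *: _).
rewrite big_mkcond big_ord_recl /= add0r -big_mkcond /=.
by apply: eq_big => [l|l _]; rewrite ?tnthS.
Qed.

Lemma ktexp_far a c : c != a -> c != a + 1 -> ktexp a c = 0.
Proof. by move=> h1 h2; rewrite /ktexp (negbTE h1) (negbTE h2). Qed.

Lemma F_cons r a c (k : r.-tuple int) : c != a -> c != a + 1 ->
  F_basis a (cons_tuple c k) = ext c (F_basis a k).
Proof.
move=> ca ca1; rewrite /F_basis /ext LE_sum.
rewrite big_mkcond big_ord_recl /= tnth0 (negbTE ca) add0r -big_mkcond /=.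
apply: eq_big => [j|j _]; first by rewrite tnthS.
rewrite LEZ LEU tset_cons scale1r; congr (v ^ (- _) *: _).
rewrite big_mkcond big_ord_recl /= tnth0 ktexp_far // add0r -big_mkcond /=.
by apply: eq_big => [l|l _]; rewrite ?tnthS.
Qed.

Lemma K_cons r a c (k : r.-tuple int) : c != a ->
  K_basis a (cons_tuple c k) = ext c (K_basis a k).
Proof.
move=> ca; rewrite /K_basis /ext LEZ LEU scale1r /= (negbTE ca) //.
Qed.

Lemma Ki_cons r a c (k : r.-tuple int) : c != a ->
  Ki_basis a (cons_tuple c k) = ext c (Ki_basis a k).
Proof.
move=> ca; rewrite /Ki_basis /ext LEZ LEU scale1r /= (negbTE ca) //.
Qed.

Lemma LE_cons r (B' : r.+1.-tuple int -> Omega r.+1) (B : r.-tuple int -> Omega r) c x :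
  (forall k, B' (cons_tuple c k) = ext c (B k)) -> LE B' (ext c x) = ext c (LE B x).
Proof.
move=> hB; rewrite /ext !LE_comp; apply: eq_LE => k.
by rewrite LEZ LEU scale1r hB.
Qed.

Definition gidx (g : gen) : int := match g with GE a | GF a | GK a | GKi a => a end.

Definition goodg (c : int) (g : gen) : bool :=
  match g with
  | GE a | GF a => (c != a) && (c != a + 1)
  | GK a | GKi a => c != a
  end.

Fixpoint goodt c t : bool :=
  match t with
  | Tgen g => goodg c g
  | Tone => true
  | Tadd s u | Tmul s u => goodt c s && goodt c u
  | Tscale _ s => goodt c s
  end.

Fixpoint bnd t : nat :=
  match t with
  | Tgen g => (absz (gidx g)).+2
  | Tone => 0
  | Tadd s u | Tmul s u => bnd s + bnd u
  | Tscale _ s => bnd s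
  end.

Lemma goodt_bnd t (c : nat) : (bnd t <= c)%N -> goodt c%:Z t.
Proof.
elim: t => [g|| s IHs u IHu | a s IHs | s IHs u IHu] /=.
- case: g => a /= h; rewrite ?(rwP andP); try (split); apply/eqP; lia.
- by [].
- by move=> h; rewrite IHs ?IHu //; lia.
- by [].
- by move=> h; rewrite IHs ?IHu //; lia.
Qed.

Lemma zeta_cons r g c (x : Omega r) : goodg c g -> zeta g (ext c x) = ext c (zeta g x).
Proof.
case: g => a /=; [move=> /andP[h1 h2] | move=> /andP[h1 h2] | move=> h1 | move=> h1];
  apply: LE_cons => k.
- by rewrite E_cons.
- by rewrite F_cons.
- by rewrite K_cons.
- by rewrite Ki_cons.
Qed.

Lemma eval_cons r t c (x : Omega r) : goodt c t ->
  evalOp (@zeta r.+1) t (ext c x) = ext c (evalOp (@zeta r) t x).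
Proof.
elim: t x => [g|| s IHs u IHu | a s IHs | s IHs u IHu] x /=.
- exact: zeta_cons.
- by [].
- by move=> /andP[hs hu]; rewrite IHs // IHu // /ext LED.
- by move=> hs; rewrite IHs // /ext LEZ.
- by move=> /andP[hs hu]; rewrite IHu // IHs.
Qed.

Lemma vanish_down r t : (forall x : Omega r.+1, evalOp (@zeta r.+1) t x = 0) ->
  forall x : Omega r, evalOp (@zeta r) t x = 0.
Proof.
move=> h x; apply: (@ext_inj r (bnd t)%:Z).
by rewrite -eval_cons ?h // goodt_bnd.
Qed.

Section Supp.
Context (K : choiceType).
Definition suppin (P : K -> Prop) (y : {malg Qv[K]}) := forall k, k \in msupp y -> P k.

Lemma suppin0 P : suppin P 0.
Proof. by move=> k; rewrite msupp0 in_fset0. Qed.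
Lemma suppinD P y z : suppin P y -> suppin P z -> suppin P (y + z).
Proof.
move=> hy hz k /(fsubsetP (msuppD_le y z)); rewrite in_fsetU => /orP[]; auto.
Qed.
Lemma suppinZ P a y : suppin P y -> suppin P (a *: y).
Proof. by move=> hy k /(fsubsetP (msuppZ_le a y)); auto. Qed.
Lemma suppinU P k : P k -> suppin P << k >>.
Proof. by move=> hk k'; rewrite msuppU oner_eq0 in_fset1 => /eqP ->. Qed.
Lemma suppin_sum P I (s : seq I) (Q : pred I) F :
  (forall i, Q i -> suppin P (F i)) -> suppin P (\sum_(i <- s | Q i) F i).
Proof.
move=> h; apply: (big_ind (suppin P)); [exact: suppin0|exact: suppinD|exact: h].
Qed.
End Supp.

Lemma LE_supp (K K' : choiceType) (f : K -> {malg Qv[K']}) x (P : K' -> Prop) :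
  (forall k, k \in msupp x -> suppin P (f k)) -> suppin P (LE f x).
Proof.
move=> h; rewrite /LE big_seq; apply: suppin_sum => k kx; apply: suppinZ; exact: h.
Qed.

Lemma nil_gen r (B : r.-tuple int -> Omega r) (p : pred int) :
  (forall k : r.-tuple int, suppin (fun k' : r.-tuple int => count p k' + 1 = count p k)%N (B k)) ->
  forall n (x : Omega r), (r < n)%N -> iter n (LE B) x = 0.
Proof.
move=> hB.
have claim : forall n (x : Omega r), suppin (fun k : r.-tuple int => n + count p k <= r)%N (iter n (LE B) x).
  elim=> [|n IH] x /=.
    by move=> k _; rewrite add0n -{2}(size_tuple k) count_size.
  apply: LE_supp => k /(IH x) hk k' /(hB k) e; lia.
move=> n x rn; apply/malgP => k; rewrite mcoeff0; apply: mcoeff_outdom.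
apply/negP => /(claim n x); lia.
Qed.

Lemma a_neq_a1 (a : int) : a != a + 1.
Proof. apply/eqP; lia. Qed.

Lemma E_supp r (a : int) (k : r.-tuple int) :
  suppin (fun k' : r.-tuple int => count (pred1 (a + 1)%R) k' + 1 = count (pred1 (a + 1)%R) k)%N (E_basis a k).
Proof.
apply: suppin_sum => j /eqP hj; apply: suppinZ; apply: suppinU.
have := count_tset (pred1 (a + 1)) k j a; rewrite /= hj eqxx.
case: eqP => [e|_ H]; first by exfalso; move: e; lia.
by rewrite -[RHS]addn0.
Qed.

Lemma F_supp r (a : int) (k : r.-tuple int) :
  suppin (fun k' : r.-tuple int => count (pred1 a) k' + 1 = count (pred1 a) k)%N (F_basis a k).
Proof.
apply: suppin_sum => j /eqP hj; apply: suppinZ; apply: suppinU.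
have := count_tset (pred1 a) k j (a + 1); rewrite /= hj eqxx.
case: eqP => [e|_ H]; first by exfalso; move: e; lia.
by rewrite -[RHS]addn0.
Qed.

Lemma E_nil r (a : int) n (x : Omega r) : (r < n)%N -> iter n (zeta (GE a)) x = 0.
Proof. exact: (nil_gen (@E_supp r a)). Qed.
Lemma F_nil r (a : int) n (x : Omega r) : (r < n)%N -> iter n (zeta (GF a)) x = 0.
Proof. exact: (nil_gen (@F_supp r a)). Qed.

Lemma v_neq0 : v != 0.
Proof. by rewrite /v tofrac_eq0 polyX_eq0. Qed.

Lemma vXn_neq1 (n : nat) : v ^+ n.+1 != 1.
Proof.
rewrite /v -tofracXn -tofrac1 tofrac_eq; apply/eqP => h.
by have := congr1 (fun p : {poly rat} => size p) h; rewrite /= size_polyXn size_poly1.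
Qed.

Lemma vz_eq1 (m : int) : v ^ m = 1 -> m = 0.
Proof.
case: m => [[|n]|n] //.
  by move=> /eqP; rewrite (negbTE (vXn_neq1 n)).
rewrite NegzE -exprz_inv.
move=> h; have : (v^-1) ^+ n.+1 = 1 by exact: h.
by rewrite exprVn => /eqP; rewrite invr_eq1 (negbTE (vXn_neq1 n)).
Qed.

Lemma vz_inj (m n : int) : v ^ m = v ^ n -> m = n.
Proof.
move=> e; have : v ^ (m - n) = 1.
  by rewrite expfzDr ?v_neq0 // e -expfzDr ?v_neq0 // subrr.
by move/vz_eq1/eqP; rewrite subr_eq0 => /eqP.
Qed.

Definition kfac (i : int) (c : Qv) : term := Tadd (Tgen (GK i)) (Tscale (- c) Tone).
Definition kterm (ps : seq (int * Qv)) : term :=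
  foldr (fun p t => Tmul (kfac p.1 p.2) t) Tone ps.

Lemma kterm_coef r ps (y : Omega r) k :
  (evalOp (@zeta r) (kterm ps) y)@_k =
  y@_k * \prod_(p <- ps) (v ^ (count (pred1 p.1) k)%:Z - p.2).
Proof.
elim: ps => [|p ps IH] /=; first by rewrite big_nil mulr1.
set z := evalOp _ _ y.
rewrite mcoeffD mcoeffZ.
have -> : lin_ext (K_basis p.1) z =
  LE (fun k : r.-tuple int => v ^ (count (pred1 p.1) k)%:Z *: << id k >>) z by [].
rewrite (@LE_coef _ _ id (@inj_id _)) IH big_cons.
ring.
Qed.

Lemma kterm_vanish r ps :
  (forall k : r.-tuple int, \prod_(p <- ps) (v ^ (count (pred1 p.1) k)%:Z - p.2) = 0) ->
  forall y : Omega r, evalOp (@zeta r) (kterm ps) y = 0.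
Proof. by move=> h y; apply/malgP => k; rewrite kterm_coef h mulr0 mcoeff0. Qed.

Section MSide.
Context (M : lmodType Qv).

Lemma lin0 (f : M -> M) : linear f -> f 0 = 0.
Proof.
move=> lf; have := lf 1 0 0; rewrite !scale1r addr0 => h.
apply: (@addrI _ (f 0)); rewrite addr0; exact: esym h.
Qed.

Lemma linZ (f : M -> M) a x : linear f -> f (a *: x) = a *: f x.
Proof. move=> lf; have := lf a x 0; rewrite !addr0 => ->; rewrite lin0 ?addr0 //. Qed.

Lemma kterm_M (rho : gen -> M -> M) lam x ps : gens_linear rho -> weight_vec rho lam x ->
  evalOp rho (kterm ps) x = (\prod_(p <- ps) (v ^ lam p.1 - p.2)) *: x.
Proof.
move=> hl hx; elim: ps => [|p ps IH] /=; first by rewrite big_nil scale1r.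
rewrite IH (linZ _ _ (hl (GK p.1))) hx !scalerA -scalerDl big_cons; congr (_ *: _); ring.
Qed.
End MSide.

Fixpoint tpow n t := match n with 0 => Tone | S n => Tmul t (tpow n t) end.

Lemma tpowE (M : lmodType Qv) (rho : gen -> M -> M) n t x :
  evalOp rho (tpow n t) x = iter n (evalOp rho t) x.
Proof. by elim: n => //= n ->. Qed.

Lemma sum_count_uniq (s k : seq int) : uniq s ->
  (\sum_(i <- s) count (pred1 i) k)%N = count (mem s) k.
Proof.
move=> us; elim: k => [|x k IH] /=; first by rewrite big1.
rewrite big_split /= IH; congr (_ + _)%N.
rewrite -(count_sum_seq (fun i => x == i)) (eq_count (a2 := pred1 x)) ?count_uniq_mem //.
Qed.

Lemma pigeon r (s : seq int) (k : r.-tuple int) : uniq s -> size s = r.+1 ->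
  has (fun i => count (pred1 i) k == 0)%N s.
Proof.
move=> us ss; apply/negPn/negP; rewrite -all_predC => /allP hall.
have : (\sum_(i <- s) 1 <= \sum_(i <- s) count (pred1 i) k)%N.
  rewrite !big_seq; apply: leq_sum => i iin.
  by have := hall i iin; rewrite /= lt0n.
rewrite sum1_size ss sum_count_uniq // => h.
have := count_size (mem s) k; rewrite size_tuple; lia.
Qed.

Lemma in_sumn_abs (i : int) s : i \in s -> (absz i <= sumn (map absz s))%N.
Proof. elim: s => //= j s IH; rewrite inE => /orP[/eqP->|/IH]; lia. Qed.

Lemma fs_of_bound (lam : int -> int) r :
  (forall s : seq int, uniq s -> all (fun i => lam i != 0) s -> (size s <= r)%N) ->
  finitely_supported lam.
Proof.
move=> hb; apply: NNPP => nfs.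
have H : forall N : nat, exists i, (N < absz i)%N /\ lam i != 0.
  move=> N; apply: NNPP => hn; apply: nfs; exists N => i hi.
  case: (eqVneq (lam i) 0) => // h; exfalso; apply: hn; by exists i.
have : forall n, exists s, [/\ uniq s, all (fun i => lam i != 0) s & size s = n].
  elim=> [|n [s [us als ss]]]; first by exists [::].
  have [i [hi li]] := H (sumn (map absz s)).
  exists (i :: s); split => //=; last by rewrite ss.
    rewrite us andbT; apply/negP => /in_sumn_abs; lia.
  by rewrite li.
move=> /(_ r.+1) [s [us als ss]]; have := hb s us als; rewrite ss; lia.
Qed.

Lemma Cpol r (M : lmodType Qv) (rho : gen -> M -> M) : in_Cr r rho -> in_Cpol rho.
Proof.
case=> [[hl hv] hw]; split => // lam x xn0 hx.
have key : forall ps, (forall k : r.-tuple int,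
    \prod_(p <- ps) (v ^ (count (pred1 p.1) k)%:Z - p.2) = 0) ->
    \prod_(p <- ps) (v ^ lam p.1 - p.2) = 0.
  move=> ps hps; have := hv (kterm ps) (kterm_vanish hps) x.
  rewrite (kterm_M _ hl hx) => /eqP; rewrite scaler_eq0 => /orP[/eqP //|/eqP x0].
  by exfalso; apply: xn0.
split.
- apply: (@fs_of_bound _ r) => s us als; rewrite leqNgt; apply/negP => hs.
  set s' := take r.+1 s.
  have us' : uniq s' by rewrite take_uniq.
  have ss' : size s' = r.+1 by rewrite size_take; case: ifP => //; lia.
  have := key [seq (i, 1) | i <- s'].
  rewrite big_map => /(_ _)/eqP; rewrite prodf_seq_eq0 => /(_ _)/hasP.
  case.
    move=> k; apply/eqP; rewrite big_map prodf_seq_eq0.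
    have /hasP [i iin /eqP ci] := pigeon k us' ss'.
    by apply/hasP; exists i => //=; rewrite ci subrr.
  move=> i /mem_take iin /=; rewrite subr_eq0 => /eqP /vz_eq1 li.
  by move/allP: als => /(_ i iin); rewrite li.
- move=> i.
  have := key [seq (i, v ^ (c%:Z)) | c <- iota 0 r.+1].
  rewrite big_map => /(_ _)/eqP; rewrite prodf_seq_eq0 => /(_ _)/hasP.
  case.
    move=> k; apply/eqP; rewrite big_map prodf_seq_eq0; apply/hasP.
    exists (count (pred1 i) k); last by rewrite /= subrr.
    by rewrite mem_iota add0n ltnS; have := count_size (pred1 i) k; rewrite size_tuple.
  move=> c _ /=; rewrite subr_eq0 => /eqP /vz_inj ->; by [].
Qed.

Lemma Cint r (M : lmodType Qv) (rho : gen -> M -> M) : in_Cr r rho -> in_Cint rho.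
Proof.
case=> [[hl hv] hw]; split => // x i; exists r.+1 => n hn; split.
- rewrite -(tpowE rho n (Tgen (GE i))); apply: hv => y; rewrite tpowE; exact: E_nil.
- rewrite -(tpowE rho n (Tgen (GF i))); apply: hv => y; rewrite tpowE; exact: F_nil.
Qed.

Section Hom.
Context (M N : lmodType Qv).
Lemma glin0 (f : M -> N) : linear f -> f 0 = 0.
Proof.
move=> lf; have := lf 1 0 0; rewrite !scale1r addr0 => h.
apply: (@addrI _ (f 0)); rewrite addr0; exact: esym h.
Qed.
Lemma glinZ (f : M -> N) a x : linear f -> f (a *: x) = a *: f x.
Proof. move=> lf; have := lf a x 0; rewrite !addr0 => ->; rewrite glin0 ?addr0 //. Qed.
Lemma glinD (f : M -> N) x y : linear f -> f (x + y) = f x + f y.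
Proof. by move=> lf; have := lf 1 x y; rewrite !scale1r. Qed.

Lemma hom_equiv (rhoM : gen -> M -> M) (rhoN : gen -> N -> N) f :
  Ur_hom rhoM rhoN f <-> U_hom rhoM rhoN f.
Proof.
split; case=> lf h; split => //.
  by move=> g m; exact: (h (Tgen g) m).
elim=> [g|| s IHs u IHu | a s IHs | s IHs u IHu] m /=.
- exact: h.
- by [].
- by rewrite glinD // IHs IHu.
- by rewrite glinZ // IHs.
- by rewrite IHs IHu.
Qed.
End Hom.

Lemma WD r t t' : evalOp (@zeta r.+1) t = evalOp (@zeta r.+1) t' ->
  evalOp (@zeta r) t = evalOp (@zeta r) t'.
Proof.
move=> e; apply: functional_extensionality => x.
have h0 : forall y : Omega r.+1, evalOp (@zeta r.+1) (Tadd t (Tscale (-1) t')) y = 0.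
  by move=> y; rewrite /= e scaleN1r subrr.
have := @vanish_down r _ h0 x; rewrite /= scaleN1r => /eqP; rewrite subr_eq0 => /eqP.
done.
Qed.

Definition phi r (X : Omega r.+1 -> Omega r.+1) : Omega r -> Omega r :=
  match excluded_middle_informative (exists t, X = evalOp (@zeta r.+1) t) with
  | left h => evalOp (@zeta r) (proj1_sig (constructive_indefinite_description _ h))
  | right _ => id
  end.

Lemma phi_eval r t : phi (evalOp (@zeta r.+1) t) = evalOp (@zeta r) t.
Proof.
rewrite /phi; case: excluded_middle_informative => [h|n]; last by exfalso; apply: n; exists t.
case: constructive_indefinite_description => t' /= e; apply: WD; by rewrite -e.
Qed.

Theorem proposition11p1 :
  (* (1) C_r is a full subcategory of C^pol /\ C^int *)
  (forall (r : nat),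
     (forall (M : lmodType Qv) (rho : gen -> M -> M),
        in_Cr r rho -> in_Cpol rho /\ in_Cint rho) /\
     (forall (M N : lmodType Qv) (rhoM : gen -> M -> M) (rhoN : gen -> N -> N)
             (f : M -> N),
        in_Cr r rhoM -> in_Cr r rhoN ->
        (Ur_hom rhoM rhoN f <-> U_hom rhoM rhoN f))) /\
  (* (2) surjective algebra homomorphism U(oo,r+1) -> U(oo,r) on generators *)
  (forall (r : nat),
     exists phi : (Omega r.+1 -> Omega r.+1) -> (Omega r -> Omega r),
       (forall X, Uinf X -> Uinf (phi X)) /\
       (forall Y, Uinf Y -> exists X, Uinf X /\ phi X = Y) /\
       (forall X Y, Uinf X -> Uinf Y ->
          phi (fun x => X x + Y x) = (fun y => phi X y + phi Y y)) /\
       (forall (c : Qv) X, Uinf X ->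
          phi (fun x => c *: X x) = (fun y => c *: phi X y)) /\
       (forall X Y, Uinf X -> Uinf Y ->
          phi (fun x => X (Y x)) = (fun y => phi X (phi Y y))) /\
       phi id = id /\
       (forall i : int,
          phi (@zeta r.+1 (GE i)) = @zeta r (GE i) /\
          phi (@zeta r.+1 (GF i)) = @zeta r (GF i) /\
          phi (@zeta r.+1 (GK i)) = @zeta r (GK i))) /\
  (* hence C_r is a full subcategory of C_{r+1} (on objects; morphisms of
     both categories are the linear maps commuting with the action) *)
  (forall (r : nat) (M : lmodType Qv) (rho : gen -> M -> M),
     in_Cr r rho -> in_Cr r.+1 rho).
Proof.
split; [|split].
- move=> r; split.
    by move=> M rho h; split; [exact: (Cpol h) | exact: (Cint h)].
  by move=> M N rhoM rhoN f _ _; exact: hom_equiv.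
- move=> r; exists (@phi r); split; [|split; [|split; [|split; [|split; [|split]]]]].
  + by move=> X [t ->]; exists t; rewrite phi_eval.
  + by move=> Y [t ->]; exists (evalOp (@zeta r.+1) t); split; [exists t|exact: phi_eval].
  + move=> X Y [t ->] [u ->]; have := phi_eval r (Tadd t u); rewrite /= => ->.
    by rewrite !phi_eval.
  + move=> c X [t ->]; have := phi_eval r (Tscale c t); rewrite /= => ->.
    by rewrite !phi_eval.
  + move=> X Y [t ->] [u ->]; have := phi_eval r (Tmul t u); rewrite /= => ->.
    by rewrite !phi_eval.
  + exact: (phi_eval r Tone).
  + move=> i; split; [|split].
    * exact: (phi_eval r (Tgen (GE i))).
    * exact: (phi_eval r (Tgen (GF i))).
    * exact: (phi_eval r (Tgen (GK i))).
- move=> r M rho [[hl hv] hw]; split => //; split => // t ht; apply: hv.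
  exact: vanish_down.
Qed.
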